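(* Let $A$ and $A'$ be pomset automata such that $A'$ weakly implements $A$. Then there exists a pomset automaton $A''$ implementing $A$. Furthermore, if $A'$ is $n$-forking (resp. flat-branching, parsimonious), then so is $A''$.
   Context: Fix a finite alphabet $\Sigma$. Pomsets are isomorphism classes of finite labelled posets over $\Sigma$; $1$ is the empty pomset; $\mathsf{SP}(\Sigma)$ is the smallest set containing $1$ and the one-element pomsets closed under sequential composition $\cdot$ and parallel composition $\parallel$. A pomset automaton (PA) is $A=\langle Q,F,\delta,\gamma\rangle$ with $F\subseteq Q$, $\delta:Q\times\Sigma\to2^Q$, $\gamma:Q\times\mathbb{M}(Q)\to2^Q$ ($\mathbb{M}(Q)$ finite multisets over $Q$, $|\phi|$ its size), each $q$ having finitely many $\phi$ with $\gamma(q,\phi)\ne\emptyset$; it is finite if $Q$ is finite. The run relation $\to_A$ is the smallest relation with: $q\xrightarrow{1}_A q$; $q\xrightarrow{a}_A q'$ if $q'\in\delta(q,a)$; $q\xrightarrow{U\cdot V}_A q'$ if $q\xrightarrow{U}_A q''\xrightarrow{V}_A q'$; $q\xrightarrow{U_1\parallel\cdots\parallel U_n}_A q'$ if $q'\in\gamma(q,\{\!|q_1,\dots,q_n|\!\})$ and each $q_i\xrightarrow{U_i}_A q_i'$ for some $q_i'\in F$. $L_A(q)=\{U\mid\exists q'\in F.\ q\xrightarrow{U}_A q'\}$. The support relation $\preceq_A$ is the smallest preorder on $Q$ with $q'\preceq_A q$ whenever $q'\in\delta(q,a)$, or $q'\in\gamma(q,\phi)$, or $q'\in\phi$ with $\gamma(q,\phi)\ne\emptyset$;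 $A$ is fork-acyclic if $r\in\phi$ and $\gamma(q,\phi)\ne\emptyset$ imply $q\not\preceq_A r$. $A'=\langle Q',F',\delta',\gamma'\rangle$ implements $A=\langle Q,F,\delta,\gamma\rangle$ if $Q\subseteq Q'$, $L_A(q)=L_{A'}(q)$ for every $q\in Q$, and if $A$ is fork-acyclic (resp. finite) then so is $A'$. $A'$ weakly implements $A$ if for every state $q$ of $A$ there is a finite set $Q_q$ of states of $A'$ with $L_A(q)=\bigcup_{x\in Q_q}L_{A'}(x)$, and if $A$ is fork-acyclic (resp. finite) then so is $A'$. $A$ is $n$-forking if $\gamma(q,\phi)\ne\emptyset$ implies $|\phi|\ge n$; parsimonious if $q\in\phi$ and $\gamma(p,\phi)\ne\emptyset$ imply $1\notin L_A(q)$; flat-branching if $\gamma(q,\phi)\ne\emptyset$ and $p\in\phi$ imply $\gamma(p,\psi)\cap F=\emptyset$ for all $\psi$. *)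

(* Defs.v *)
From mathcomp Require Import all_boot.
From Stdlib Require Import Sorting.Permutation Relations.Relation_Operators.

Set Implicit Arguments.
Unset Strict Implicit.
Unset Printing Implicit Defensive.

(* Labelled structures on a finite carrier 'I_n; pomsets are taken up  *)
(* to isomorphism (all notions below are isomorphism-invariant).       *)
Record lpo (S : Type) := LPo {
  lpo_n : nat;
  lpo_lab : 'I_lpo_n -> S;
  lpo_le : 'I_lpo_n -> 'I_lpo_n -> bool }.

Arguments LPo {S} lpo_n lpo_lab lpo_le.
Arguments lpo_n {S} l.
Arguments lpo_lab {S} l _.
Arguments lpo_le {S} l _ _.

Definition is_poset S (U : lpo S) : Prop :=
  (forall i, lpo_le U i i) /\
  (forall i j, lpo_le U i j -> lpo_le U j i -> i = j) /\
  (forall i j k, lpo_le U i j -> lpo_le U j k -> lpo_le U i k).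

Definition lpo_iso S (U V : lpo S) : Prop :=
  exists f : 'I_(lpo_n U) -> 'I_(lpo_n V),
    bijective f /\
    (forall i, lpo_lab V (f i) = lpo_lab U i) /\
    (forall i j, lpo_le V (f i) (f j) = lpo_le U i j).

Definition lpo_empty S : lpo S :=
  LPo 0 (fun i : 'I_0 => False_rect S (notF (eq_ind (i < 0) is_true (ltn_ord i) false (ltn0 i))))
        (fun _ _ => true).

Definition lpo_atom S (a : S) : lpo S :=
  LPo 1 (fun _ => a) (fun _ _ => true).

Definition lpo_seq S (U V : lpo S) : lpo S :=
  LPo (lpo_n U + lpo_n V)
    (fun i => match split i with inl i1 => lpo_lab U i1 | inr i2 => lpo_lab V i2 end)
    (fun i j => match split i, split j with
                | inl i1, inl j1 => lpo_le U i1 j1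
                | inr i2, inr j2 => lpo_le V i2 j2
                | inl _, inr _ => true
                | inr _, inl _ => false end).

Definition lpo_par S (U V : lpo S) : lpo S :=
  LPo (lpo_n U + lpo_n V)
    (fun i => match split i with inl i1 => lpo_lab U i1 | inr i2 => lpo_lab V i2 end)
    (fun i j => match split i, split j with
                | inl i1, inl j1 => lpo_le U i1 j1
                | inr i2, inr j2 => lpo_le V i2 j2
                | _, _ => false end).

(* Multisets over Q are lists taken up to permutation.                 *)
Record PA (S : Type) (Q : Type) := MkPA {
  pa_F : Q -> Prop;
  pa_delta : Q -> S -> Q -> Prop;
  pa_gamma : Q -> list Q -> Q -> Prop;
  pa_gamma_perm : forall q phi psi q',
      Permutation phi psi -> pa_gamma q phi q' -> pa_gamma q psi q';
  pa_gamma_fin : forall q, exists Phi : list (list Q),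
      forall phi, (exists q', pa_gamma q phi q') ->
        exists psi, List.In psi Phi /\ Permutation phi psi }.

Section PAdefs.
Variables (S : Type) (Q : Type) (A : PA S Q).

Inductive run : Q -> lpo S -> Q -> Prop :=
| run_unit q : run q (lpo_empty S) q
| run_atom q a q' : pa_delta A q a q' -> run q (lpo_atom a) q'
| run_seq q U q'' V q' : run q U q'' -> run q'' V q' -> run q (lpo_seq U V) q'
| run_fork q (k : nat) (qs : 'I_k -> Q) (Us : 'I_k -> lpo S) (fs : 'I_k -> Q) q' :
    pa_gamma A q (map qs (enum 'I_k)) q' ->
    (forall i, pa_F A (fs i)) ->
    (forall i, run (qs i) (Us i) (fs i)) ->
    run q (\big[@lpo_par S/lpo_empty S]_(i < k) Us i) q'
| run_iso q U V q' : run q U q' -> lpo_iso U V -> run q V q'.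

Definition lang (q : Q) (U : lpo S) : Prop := exists q', pa_F A q' /\ run q U q'.

Definition support_step (x y : Q) : Prop :=
  (exists a, pa_delta A y a x) \/
  (exists phi, pa_gamma A y phi x) \/
  (exists phi, List.In x phi /\ exists r, pa_gamma A y phi r).

Definition support : Q -> Q -> Prop := clos_refl_trans Q support_step.

Definition fork_acyclic : Prop :=
  forall q phi r, List.In r phi -> (exists p, pa_gamma A q phi p) -> ~ support q r.


Definition n_forking (n : nat) : Prop :=
  forall q phi q', pa_gamma A q phi q' -> n <= size phi.

Definition parsimonious : Prop :=
  forall p phi q, List.In q phi -> (exists r, pa_gamma A p phi r) ->
    ~ lang q (lpo_empty S).

Definition flat_branching : Prop :=
  forall q phi p, (exists r, pa_gamma A q phi r) -> List.In p phi ->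
    forall psi r, pa_gamma A p psi r -> ~ pa_F A r.

End PAdefs.

Definition pa_finite (S Q : Type) (A : PA S Q) : Prop :=
  exists s : list Q, forall q : Q, List.In q s.

Definition implements (S : Type) (Q Q' : Type) (A' : PA S Q') (A : PA S Q) : Prop :=
  exists iota : Q -> Q',
    (forall q1 q2, iota q1 = iota q2 -> q1 = q2) /\
    (forall q U, lang A q U <-> lang A' (iota q) U) /\
    (fork_acyclic A -> fork_acyclic A') /\
    (pa_finite A -> pa_finite A').

Definition weakly_implements (S : Type) (Q Q' : Type) (A' : PA S Q') (A : PA S Q) : Prop :=
  exists Qq : Q -> list Q',
    (forall q U, lang A q U <-> exists x, List.In x (Qq q) /\ lang A' x U) /\
    (fork_acyclic A -> fork_acyclic A') /\
    (pa_finite A -> pa_finite A').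

(* Main.v *)
Require Import Defs.
From mathcomp Require Import all_boot.
From Stdlib Require Import Sorting.Permutation Relations.Relation_Operators.

Lemma smap_lmap (A B : Type) (f : A -> B) (l : seq A) : seq.map f l = List.map f l.
Proof. elim: l => //= a l ->. Qed.

Lemma iso_n (S : Type) (U V : lpo S) : lpo_iso U V -> lpo_n U = lpo_n V.
Proof.
move=> [f [bf _]]. have := bij_eq_card bf. by rewrite !card_ord.
Qed.

Arguments iso_n {S U V}.

Lemma iso0 (S : Type) (U V : lpo S) : lpo_n U = 0 -> lpo_n V = 0 -> lpo_iso U V.
Proof.
case: U => n lab le /= En; case: V => m lab' le' /= Em; subst n m.
exists id; split; first by exists id.
split; by case.
Qed.

Lemma in_mem_In (T : eqType) (x : T) (s : seq T) : x \in s -> List.In x s.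
Proof. elim: s => //= a s IH; rewrite in_cons => /orP [/eqP ->|/IH]; auto. Qed.

Section Constr.
Variables (S Q Q' : Type) (A : PA S Q) (A' : PA S Q') (Qq : Q -> list Q').

Definition G0 (s : Q + Q') (phi : list Q') (r : Q') : Prop :=
  match s with
  | inl q => exists x, List.In x (Qq q) /\ pa_gamma A' x phi r
  | inr x => pa_gamma A' x phi r
  end.

Definition D0 (s : Q + Q') (a : S) (r : Q') : Prop :=
  match s with
  | inl q => exists x, List.In x (Qq q) /\ pa_delta A' x a r
  | inr x => pa_delta A' x a r
  end.

Definition F2 (s : Q + Q') : Prop :=
  match s with
  | inl q => exists x U, List.In x (Qq q) /\ lpo_n U = 0 /\ lang A' x U
  | inr x => pa_F A' x
  end.

Definition G2 (s : Q + Q') (phi : list (Q + Q')) (r : Q + Q') : Prop :=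
  exists phi' r', phi = List.map inr phi' /\ r = inr r' /\ G0 s phi' r'.

Definition D2 (s : Q + Q') (a : S) (r : Q + Q') : Prop :=
  exists r', r = inr r' /\ D0 s a r'.

Lemma G2_perm : forall q phi psi q',
      Permutation phi psi -> G2 q phi q' -> G2 q psi q'.
Proof.
move=> q phi psi q' P [phi' [r' [E [E2 G]]]]; subst.
have [l3 [E3 P3]] := Permutation_map_inv _ _ (Permutation_sym P).
exists l3, r'; split => //; split => //.
case: q G => [q [x [Hx G]]|x G] /=.
  exists x; split => //; exact: pa_gamma_perm G.
exact: pa_gamma_perm G.
Qed.

Lemma fin_list (l : list Q') : exists Phi : list (list Q'),
  forall x phi, List.In x l -> (exists q', pa_gamma A' x phi q') ->
        exists psi, List.In psi Phi /\ Permutation phi psi.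
Proof.
elim: l => [|a l [Phi IH]]; first by exists nil.
have [Phia Ha] := pa_gamma_fin A' a.
exists (Phia ++ Phi) => x phi /= [<-|Hx] Hg.
  have [psi [H1 H2]] := Ha phi Hg. exists psi; split => //; apply List.in_or_app; auto.
have [psi [H1 H2]] := IH x phi Hx Hg. exists psi; split => //; apply List.in_or_app; auto.
Qed.

Lemma G2_fin : forall q, exists Phi : list (list (Q + Q')),
      forall phi, (exists q', G2 q phi q') ->
        exists psi, List.In psi Phi /\ Permutation phi psi.
Proof.
move=> q.
have [Phi HP] : exists Phi : list (list Q'),
  forall phi, (exists q', G0 q phi q') ->
        exists psi, List.In psi Phi /\ Permutation phi psi.
  case: q => [q|x] /=.
    have [Phi H] := fin_list (Qq q).
    exists Phi => phi [q' [x [Hx G]]]. apply: H Hx _; eauto.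
  exact: pa_gamma_fin.
exists (List.map (List.map inr) Phi) => phi [q' [phi' [r' [E [_ G]]]]]; subst.
have [psi [H1 H2]] := HP phi' (ex_intro _ r' G).
exists (List.map inr psi); split; last exact: Permutation_map.
exact: List.in_map.
Qed.

Definition A2 : PA S (Q + Q') := @MkPA S (Q + Q') F2 D2 G2 G2_perm G2_fin.

Lemma R1 s U r : run A2 s U r -> forall x, s = inr x ->
  exists y, r = inr y /\ run A' x U y.
Proof.
elim=> {s U r}.
- move=> q x ->; exists x; split => //; exact: run_unit.
- move=> q a q' [r' [-> D]] x E; subst; exists r'; split => //; exact: run_atom.
- move=> q U q'' V q' _ IH1 _ IH2 x E.
  have [y [E1 R1]] := IH1 x E.
  have [z [E2 R2]] := IH2 y E1.
  exists z; split => //; exact: run_seq R1 R2.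
- move=> q k qs Us fs q' [phi' [r' [E [E2 G]]]] HF _ IH x Eq; subst.
  have hq : forall i, exists y, qs i = inr y.
    move=> i.
    have : List.In (qs i) (List.map inr phi').
      rewrite -E smap_lmap; apply: List.in_map; apply: in_mem_In; exact: mem_enum.
    case/List.in_map_iff => y [<- _]; eauto.
  pose qs' i := match qs i with inr y => y | inl _ => x end.
  have Eqs : forall i, qs i = inr (qs' i).
    by move=> i; rewrite /qs'; case: (hq i) => y ->.
  have hf : forall i, exists y, fs i = inr y /\ run A' (qs' i) (Us i) y.
    move=> i; exact: IH i (qs' i) (Eqs i).
  pose fs' i := match fs i with inr y => y | inl _ => x end.
  have Efs : forall i, fs i = inr (fs' i) /\ run A' (qs' i) (Us i) (fs' i).
    by move=> i; rewrite /fs'; case: (hf i) => y [-> R].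
  exists r'; split => //.
  apply: (run_fork (qs := qs') (fs := fs')).
  + have -> : seq.map qs' (enum 'I_k) = phi' => //.
      have Hl : forall l, seq.map qs' l =
          List.map (fun s => match s with inr y => y | inl _ => x end) (seq.map qs l).
        by elim=> //= i l ->; rewrite Eqs.
      rewrite Hl E; by elim: (phi') => //= a l ->.
  + move=> i; have := HF i; by case: (Efs i) => -> _.
  + by move=> i; case: (Efs i).
- move=> q U V q' _ IH I x E; have [y [-> R]] := IH x E.
  exists y; split => //; exact: run_iso R I.
Qed.
Arguments R1 {s U r}.


Lemma R2 x U y : run A' x U y -> run A2 (inr x) U (inr y).
Proof.
elim=> {x U y}.
- move=> q; exact: run_unit.
- move=> q a q' D; apply: run_atom; exists q'; split => //.
- move=> q U q'' V q' _ IH1 _ IH2; exact: run_seq IH1 IH2.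
- move=> q k qs Us fs q' G HF _ IH.
  apply: (run_fork (qs := fun i => inr (qs i)) (fs := fun i => inr (fs i))) => //.
  exists (seq.map qs (enum 'I_k)), q'; split => //.
  by rewrite !smap_lmap List.map_map.
- move=> q U V q' _ IH I; exact: run_iso IH I.
Qed.
Arguments R2 {x U y}.


Lemma run_empty {s U} : lpo_n U = 0 -> run A2 s U s.
Proof. move=> H; apply: run_iso (run_unit _ _) _; exact: iso0. Qed.

Lemma R3 s U r : run A2 s U r -> forall q, s = inl q ->
  (r = inl q /\ lpo_n U = 0) \/ exists x, List.In x (Qq q) /\ run A2 (inr x) U r.
Proof.
elim=> {s U r}.
- move=> q q0 ->; left; split => //.
- move=> q a q' [r' [-> D]] q0 E; subst.
  case: D => x [Hx D]; right; exists x; split => //; apply: run_atom; exists r'; split => //.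
- move=> q U q'' V q' R1 IH1 R2 IH2 q0 E.
  case: (IH1 q0 E) => [[E1 n1]|[x [Hx R]]].
    case: (IH2 q0 E1) => [[E2 n2]|[x [Hx R']]].
      left; split => //=; by rewrite n1 n2.
    right; exists x; split => //; apply: run_seq R'; exact: run_empty.
  right; exists x; split => //; exact: run_seq R R2.
- move=> q k qs Us fs q' [phi' [r' [E [E2 G]]]] HF R IH q0 Eq; subst.
  case: G => x [Hx G]; right; exists x; split => //; apply: run_fork HF R.
  exists phi', r'; split => //.
- move=> q U V q' R IH I q0 E.
  case: (IH q0 E) => [[E1 n1]|[x [Hx R']]].
    left; split => //; by rewrite -(iso_n I).
  right; exists x; split => //; exact: run_iso R' I.
Qed.
Arguments R3 {s U r}.


Lemma R4 s U r : run A2 s U r -> forall x, s = inr x -> forall q, List.In x (Qq q) ->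
  run A2 (inl q) U r \/ (r = inr x /\ lpo_n U = 0).
Proof.
elim=> {s U r}.
- move=> q x -> q0 _; right; split => //.
- move=> q a q' [r' [-> D]] x E q0 Hx; subst.
  left; apply: run_atom; exists r'; split => //; exists x; split => //.
- move=> q U q'' V q' R1 IH1 R2 IH2 x E q0 Hx.
  case: (IH1 x E q0 Hx) => [R|[E1 n1]].
    left; exact: run_seq R R2.
  case: (IH2 x E1 q0 Hx) => [R|[E2 n2]].
    left; apply: run_seq R; exact: run_empty.
  right; split => //=; by rewrite n1 n2.
- move=> q k qs Us fs q' [phi' [r' [E [E2 G]]]] HF R IH x Eq q0 Hx; subst.
  left; apply: run_fork HF R.
  exists phi', r'; split => //; split => //; exists x; split => //.
- move=> q U V q' R IH I x E q0 Hx.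
  case: (IH x E q0 Hx) => [R'|[E1 n1]].
    left; exact: run_iso R' I.
  right; split => //; by rewrite -(iso_n I).
Qed.
Arguments R4 {s U r}.


Lemma lang_inr x U : lang A2 (inr x) U <-> lang A' x U.
Proof.
split.
  move=> [r [F R]]; have [y [E R']] := R1 R _ (erefl _); subst; exists y; split => //.
move=> [y [F R]]; exists (inr y); split => //; exact: R2.
Qed.

Lemma lang_inl q U : lang A2 (inl q) U <-> exists x, List.In x (Qq q) /\ lang A' x U.
Proof.
split.
  move=> [r [F R]]; case: (R3 R _ (erefl _)) => [[E n]|[x [Hx R']]].
    subst; case: F => x [U0 [Hx [n0 [y [Fy Ry]]]]].
    exists x; split => //; exists y; split => //; apply: run_iso Ry _; exact: iso0.
  exists x; split => //; apply/lang_inr; exists r; split => //.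
move=> [x [Hx [y [Fy Ry]]]].
case: (R4 (R2 Ry) _ (erefl _) _ Hx) => [R|[E n]].
  exists (inr y); split => //.
case: E => E; subst y.
exists (inl q); split; first by exists x, U; split => //; split => //; exists x.
exact: run_empty.
Qed.

Lemma supp_inl {a b} : clos_refl_trans _ (support_step A2) a b ->
  forall y, b = inr y -> exists x, a = inr x /\ Defs.support A' x y.
Proof.
elim=> {a b}.
- move=> a b St y E; subst.
  case: St => [[c [r' [E D]]]|[[phi [phi' [r' [_ [E G]]]]]|[phi [Hin [r [phi' [r' [E [_ G]]]]]]]]].
  + subst; exists r'; split => //; apply: rt_step; left; exists c; exact: D.
  + subst; exists r'; split => //; apply: rt_step; right; left; exists phi'; exact: G.
  + subst; case/List.in_map_iff: Hin => z [<- Hz]; exists z; split => //.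
    apply: rt_step; right; right; exists phi'; split => //; exists r'; exact: G.
- move=> a y E; subst; exists y; split => //; exact: rt_refl.
- move=> a b c _ IH1 _ IH2 y E.
  have [z [E2 S2]] := IH2 y E.
  have [x [E1 S1]] := IH1 z E2.
  exists x; split => //; exact: rt_trans S1 S2.
Qed.

End Constr.

Theorem lemma6p8 (Sigma : finType) (Q Q' : Type) (A : PA Sigma Q) (A' : PA Sigma Q') :
  weakly_implements A' A ->
  exists (Q'' : Type) (A'' : PA Sigma Q''),
    implements A'' A /\
    (forall n : nat, n_forking A' n -> n_forking A'' n) /\
    (flat_branching A' -> flat_branching A'') /\
    (parsimonious A' -> parsimonious A'').
Proof.
move=> [Qq [HL [HFA HFin]]].
exists (Q + Q')%type, (@A2 Sigma Q Q' A' Qq); split; last split; last split.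
- exists inl; split; first by move=> q1 q2 [].
  split; first by move=> q U; rewrite lang_inl.
  split.
    move=> FA; have FA' := HFA FA.
    move=> q phi r Hin [p [phi' [r' [E [_ G]]]]] Sp; subst.
    case/List.in_map_iff: Hin => z [Ez Hz]; subst.
    have [x [Ex Sx]] := @supp_inl Sigma Q Q' A' Qq _ _ Sp _ (erefl _); subst.
    apply: (FA' x phi' z Hz) => //; exists r'; exact: G.
  move=> Fin; have [s Hs] := Fin; have [s' Hs'] := HFin Fin.
  exists (List.map inl s ++ List.map inr s') => [[q|x]]; apply: List.in_or_app.
    left; exact: List.in_map.
  right; exact: List.in_map.
- move=> n Hn q phi q' [phi' [r' [E [_ G]]]]; subst.
  rewrite -smap_lmap size_map.
  case: q G => [q [x [_ G]]|x G] /=; exact: Hn G.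
- move=> FB q phi p [r [phi' [r' [E [_ G]]]]] Hin psi r2 [psi' [r2' [_ [E2 G2']]]]; subst.
  case/List.in_map_iff: Hin => z [Ez Hz]; subst => /= Fz.
  case: q G => [q [x [_ G]]|x G] /=.
    apply: (FB x phi' z _ Hz psi' r2' G2' Fz); eauto.
  apply: (FB x phi' z _ Hz psi' r2' G2' Fz); eauto.
- move=> PS p phi q Hin [r [phi' [r' [E [_ G]]]]]; subst.
  case/List.in_map_iff: Hin => z [Ez Hz]; subst.
  rewrite lang_inr.
  case: p G => [p [x [_ G]]|x G] /=.
    apply: (PS x phi' z Hz); eauto.
  apply: (PS x phi' z Hz); eauto.
Qed.
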